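(* Let $V(r)=r^{-6}-2r^{-3}$. There exists $A_3>0$ such that for every $A>A_3$, every minimizer $y_A\ge1$ of $y\mapsto E_V(0,y,A)$ on $[1,\infty)$ satisfies $$X_1(A)^{1/3}\le y_A\le X_2(A)^{1/3},$$ where $$X_{1,2}(A)=\frac{2\zeta_{\mathbb Z^2}(6)A^3\mp\sqrt{4\zeta_{\mathbb Z^2}(6)^2A^6-32A^4+8\zeta_{\mathbb Z^2}(12)A^2}}{4}.$$ In particular, $\lim_{A\to\infty}y_A=+\infty$, and there exists $C>0$ such that $y_A\le CA$ for all $A>A_3$.
   Context: For $A>0$, $x\in\mathbb R$, $y>0$, $E_{f}(x,y,A)=\sum_{m,n} f\left(A\left[\frac1y(m+xn)^2+yn^2\right]\right)$, where $\sum_{m,n}$ denotes summation over all $(m,n)\in\mathbb Z^2\setminus\{(0,0)\}$; $E_V(0,y,A)$, $y\ge1$, is the energy of the rectangular lattice $\mathbb Z(\sqrt{A/y},0)\oplus\mathbb Z(0,\sqrt{Ay})$. $\zeta_{\mathbb Z^2}(s)=\sum_{m,n}(m^2+n^2)^{-s/2}$. *)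

(* Defs.v *)
From Stdlib Require Import Reals Lra ZArith ClassicalEpsilon.
Open Scope R_scope.

Definition sq_partial (g : Z -> Z -> R) (N : nat) : R :=
  sum_f_R0 (fun i =>
    sum_f_R0 (fun j =>
      let m := (Z.of_nat i - Z.of_nat N)%Z in
      let n := (Z.of_nat j - Z.of_nat N)%Z in
      if andb (Z.eqb m 0) (Z.eqb n 0) then 0 else g m n) (2 * N)) (2 * N).

(* The lattice sum  sum_{(m,n) in Z^2 \ {0}} g m n, defined as the limit of
   the square partial sums (all sums used here are absolutely convergent,
   so this is the usual value). *)
Definition lattice_sum (g : Z -> Z -> R) : R :=
  epsilon (inhabits 0) (fun l => Un_cv (sq_partial g) l).

Definition E_f (f : R -> R) (x y A : R) : R :=
  lattice_sum (fun m n =>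
    f (A * ( / y * (IZR m + x * IZR n) ^ 2 + y * (IZR n) ^ 2))).

Definition V (r : R) : R := / r ^ 6 - 2 * / r ^ 3.

(* zeta_{Z^2}(s) for s = 2k even: sum (m^2+n^2)^{-k} *)
Definition zeta_Z2_even (k : nat) : R :=
  lattice_sum (fun m n => / (IZR m ^ 2 + IZR n ^ 2) ^ k).

Definition zeta6 : R := zeta_Z2_even 3.
Definition zeta12 : R := zeta_Z2_even 6.

Definition X1 (A : R) : R :=
  (2 * zeta6 * A ^ 3
   - sqrt (4 * zeta6 ^ 2 * A ^ 6 - 32 * A ^ 4 + 8 * zeta12 * A ^ 2)) / 4.
Definition X2 (A : R) : R :=
  (2 * zeta6 * A ^ 3
   + sqrt (4 * zeta6 ^ 2 * A ^ 6 - 32 * A ^ 4 + 8 * zeta12 * A ^ 2)) / 4.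

Definition is_minimizer (A y : R) : Prop :=
  1 <= y /\ forall y', 1 <= y' -> E_f V 0 y A <= E_f V 0 y' A.

(* Main.v *)
Require Import Defs.
From Stdlib Require Import Reals Lra Lia Psatz ZArith Bool ClassicalEpsilon FunctionalExtensionality.
Open Scope R_scope.

Definition T (g : Z -> Z -> R) (N i j : nat) : R :=
  if andb (Z.eqb (Z.of_nat i - Z.of_nat N) 0) (Z.eqb (Z.of_nat j - Z.of_nat N) 0)
  then 0 else g (Z.of_nat i - Z.of_nat N)%Z (Z.of_nat j - Z.of_nat N)%Z.

Lemma sqT g N : sq_partial g N =
  sum_f_R0 (fun i => sum_f_R0 (fun j => T g N i j) (2 * N)) (2 * N).
Proof. reflexivity. Qed.

Lemma shiftZ i N : (Z.of_nat (S i) - Z.of_nat (S N) = Z.of_nat i - Z.of_nat N)%Z.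
Proof. lia. Qed.

Lemma T_shift g N i j : T g (S N) (S i) (S j) = T g N i j.
Proof. unfold T. rewrite !shiftZ. reflexivity. Qed.

Lemma T_cases (P : R -> Prop) g N i j : P 0 ->
  ((Z.of_nat i - Z.of_nat N <> 0 \/ Z.of_nat j - Z.of_nat N <> 0)%Z ->
     P (g (Z.of_nat i - Z.of_nat N)%Z (Z.of_nat j - Z.of_nat N)%Z)) ->
  P (T g N i j).
Proof.
  intros H0 H1. unfold T. destruct (andb _ _) eqn:E; [exact H0|].
  apply H1. apply andb_false_iff in E. destruct E as [E|E]; [left|right];
  apply Z.eqb_neq in E; exact E.
Qed.

Definition nonnegf (g : Z -> Z -> R) := forall m n, (m <> 0 \/ n <> 0)%Z -> 0 <= g m n.

Lemma T_nonneg g N i j : nonnegf g -> 0 <= T g N i j.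
Proof. intros H. apply T_cases; [lra|]. intros; apply H; auto. Qed.

Lemma sq_le g h N : (forall m n, (m <> 0 \/ n <> 0)%Z -> g m n <= h m n) ->
  sq_partial g N <= sq_partial h N.
Proof.
  intros H. rewrite !sqT. apply sum_Rle; intros. apply sum_Rle; intros.
  unfold T. destruct (andb _ _) eqn:E; [lra|].
  apply H. apply andb_false_iff in E. destruct E as [E|E]; [left|right];
  apply Z.eqb_neq in E; exact E.
Qed.

Lemma sum_lin (u v : nat -> R) a b n :
  sum_f_R0 (fun j => a * u j + b * v j) n = a * sum_f_R0 u n + b * sum_f_R0 v n.
Proof. induction n; simpl; [ring|rewrite IHn; ring]. Qed.

Lemma sq_lin a b g h N :
  sq_partial (fun m n => a * g m n + b * h m n) N = a * sq_partial g N + b * sq_partial h N.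
Proof.
  rewrite !sqT. rewrite <- sum_lin. apply sum_eq; intros i _.
  rewrite <- sum_lin. apply sum_eq; intros j _. unfold T.
  destruct (andb _ _); ring.
Qed.

Lemma peel (f : nat -> R) k :
  sum_f_R0 f (S (S k)) = f 0%nat + sum_f_R0 (fun i => f (S i)) k + f (S (S k)).
Proof. rewrite tech5. rewrite decomp_sum by lia. simpl pred. ring. Qed.

Lemma sq_grow g N : nonnegf g -> sq_partial g N <= sq_partial g (S N).
Proof.
  intros H. rewrite !sqT. replace (2 * S N)%nat with (S (S (2 * N))) by lia.
  rewrite peel.
  assert (Hr : forall i, 0 <= sum_f_R0 (fun j => T g (S N) i j) (S (S (2 * N)))).
  { intros; apply cond_pos_sum; intros; apply T_nonneg; auto. }
  cut (sum_f_R0 (fun i => sum_f_R0 (fun j => T g N i j) (2 * N)) (2 * N) <=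
       sum_f_R0 (fun i => sum_f_R0 (fun j => T g (S N) (S i) j) (S (S (2 * N)))) (2 * N)).
  { intros; generalize (Hr 0%nat) (Hr (S (S (2 * N)))); lra. }
  apply sum_Rle; intros i _. rewrite peel.
  assert (H1 := T_nonneg g (S N) (S i) 0 H).
  assert (H2 := T_nonneg g (S N) (S i) (S (S (2*N))) H).
  assert (E : sum_f_R0 (fun j => T g (S N) (S i) (S j)) (2 * N) =
              sum_f_R0 (fun j => T g N i j) (2 * N)).
  { apply sum_eq; intros; apply T_shift. }
  lra.
Qed.

Lemma sq1 g : sq_partial g 1 =
  g (-1)%Z (-1)%Z + g (-1)%Z 0%Z + g (-1)%Z 1%Z + g 0%Z (-1)%Z + g 0%Z 1%Z
  + g 1%Z (-1)%Z + g 1%Z 0%Z + g 1%Z 1%Z.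
Proof. rewrite sqT. simpl. unfold T. simpl. ring. Qed.

Lemma sq1_ge g : nonnegf g -> g (-1)%Z 0%Z + g 1%Z 0%Z <= sq_partial g 1.
Proof.
  intros H. rewrite sq1.
  assert (0 <= g (-1)%Z (-1)%Z) by (apply H; lia).
  assert (0 <= g (-1)%Z 1%Z) by (apply H; lia).
  assert (0 <= g 0%Z (-1)%Z) by (apply H; lia).
  assert (0 <= g 0%Z 1%Z) by (apply H; lia).
  assert (0 <= g 1%Z (-1)%Z) by (apply H; lia).
  assert (0 <= g 1%Z 1%Z) by (apply H; lia).
  lra.
Qed.

Lemma cv_nonneg g B : nonnegf g -> (forall N, sq_partial g N <= B) ->
  Un_cv (sq_partial g) (lattice_sum g).
Proof.
  intros H HB. destruct (growing_cv (sq_partial g)) as [l Hl].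
  - intro n; apply sq_grow; auto.
  - exists B. intros x [i ->]. apply HB.
  - unfold lattice_sum. apply epsilon_spec. exists l; exact Hl.
Qed.

Lemma lim_ge g B N : nonnegf g -> (forall N, sq_partial g N <= B) ->
  sq_partial g N <= lattice_sum g.
Proof.
  intros H HB. apply growing_ineq; [intro; apply sq_grow; auto|]. eapply cv_nonneg; eauto.
Qed.

Lemma cube_lt a b : 0 <= a -> a < b -> a ^ 3 < b ^ 3.
Proof.
  intros. replace (b ^ 3 - a ^ 3) with ((b - a) * (b*b + a*b + a*a)) by ring.
  apply Rminus_gt_0_lt. replace (b ^ 3 - a ^ 3) with ((b - a) * (b*b + a*b + a*a)) by ring.
  apply Rmult_lt_0_compat; nra.
Qed.

Definition a (N i : nat) : R := / (1 + IZR (Z.of_nat i - Z.of_nat N) ^ 2).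

Lemma a_pos N i : 0 < a N i.
Proof. unfold a. apply Rinv_0_lt_compat. nra. Qed.

Lemma IZR_sq_nat k : IZR (Z.of_nat k) ^ 2 = INR k ^ 2.
Proof. rewrite <- INR_IZR_INZ. reflexivity. Qed.

Lemma suma N : sum_f_R0 (a N) (2 * N) <= 5 - 4 / (INR N + 1).
Proof.
  induction N.
  - simpl. unfold a. simpl. lra.
  - replace (2 * S N)%nat with (S (S (2 * N))) by lia. rewrite peel.
    assert (E : sum_f_R0 (fun i => a (S N) (S i)) (2 * N) = sum_f_R0 (a N) (2 * N)).
    { apply sum_eq; intros; unfold a; rewrite shiftZ; reflexivity. }
    rewrite E.
    assert (E1 : a (S N) 0 = / (1 + (INR N + 1) ^ 2)).
    { unfold a. replace (Z.of_nat 0 - Z.of_nat (S N))%Z with (- Z.of_nat (S N))%Z by lia.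
      rewrite opp_IZR. replace ((- IZR (Z.of_nat (S N))) ^ 2) with (IZR (Z.of_nat (S N)) ^ 2) by ring.
      rewrite IZR_sq_nat, S_INR. reflexivity. }
    assert (E2 : a (S N) (S (S (2 * N))) = / (1 + (INR N + 1) ^ 2)).
    { unfold a. replace (Z.of_nat (S (S (2 * N))) - Z.of_nat (S N))%Z with (Z.of_nat (S N)) by lia.
      rewrite IZR_sq_nat, S_INR. reflexivity. }
    rewrite E1, E2, S_INR.
    assert (0 <= INR N) by apply pos_INR.
    set (n := INR N) in *.
    assert (2 * / (1 + (n + 1) ^ 2) <= 4 / (n + 1) - 4 / (n + 1 + 1)).
    { replace (4 / (n + 1) - 4 / (n + 1 + 1)) with (4 / ((n+1)*(n+2))) by (field; lra).
      replace (2 * / (1 + (n + 1) ^ 2)) with (4 / (2 * (1 + (n+1)^2))) by (field; nra).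
      unfold Rdiv. apply Rmult_le_compat_l; [lra|]. apply Rinv_le_contravar; nra. }
    lra.
Qed.

Lemma int_sq_ge1 m : (m <> 0)%Z -> 1 <= IZR m ^ 2.
Proof.
  intros H. replace (IZR m ^ 2) with (IZR (m * m)) by (rewrite mult_IZR; ring).
  apply IZR_le. nia.
Qed.

Lemma s_ge1 m n : (m <> 0 \/ n <> 0)%Z -> 1 <= IZR m ^ 2 + IZR n ^ 2.
Proof.
  intros [H|H]; apply int_sq_ge1 in H.
  - assert (0 <= IZR n ^ 2) by nra. lra.
  - assert (0 <= IZR m ^ 2) by nra. lra.
Qed.

Definition sk (k : nat) : Z -> Z -> R := fun m n => / (IZR m ^ 2 + IZR n ^ 2) ^ k.

Lemma sk_nonneg k : nonnegf (sk k).
Proof.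
  intros m n H. unfold sk. apply Rlt_le, Rinv_0_lt_compat, pow_lt.
  generalize (s_ge1 m n H); lra.
Qed.

Lemma s3_bound m n : (m <> 0 \/ n <> 0)%Z ->
  sk 3 m n <= 3 * (/ (1 + IZR m ^ 2) * / (1 + IZR n ^ 2)).
Proof.
  intros H. generalize (s_ge1 m n H). unfold sk.
  assert (0 <= IZR m ^ 2) by nra. assert (0 <= IZR n ^ 2) by nra.
  set (u := IZR m ^ 2) in *. set (v := IZR n ^ 2) in *. intros Hs.
  replace (3 * (/ (1 + u) * / (1 + v))) with (/ ((1+u)*(1+v)/3)) by (field; lra).
  apply Rinv_le_contravar. nra.
  set (s := u + v) in *.
  assert (u * v <= s * s) by (unfold s; nra).
  assert (s <= s^2) by nra. assert (s^2 <= s^3) by nra.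
  replace ((1 + u) * (1 + v)) with (1 + s + u * v) by (unfold s; ring). nra.
Qed.

Lemma sum_scal (u : nat -> R) c n : sum_f_R0 (fun j => c * u j) n = c * sum_f_R0 u n.
Proof. induction n; simpl; [ring|rewrite IHn; ring]. Qed.

Lemma s3_partial N : sq_partial (sk 3) N <= 75.
Proof.
  rewrite sqT.
  apply Rle_trans with (sum_f_R0 (fun i => sum_f_R0 (fun j => 3 * a N i * a N j) (2*N)) (2*N)).
  - apply sum_Rle; intros i _; apply sum_Rle; intros j _.
    apply (T_cases (fun x => x <= 3 * a N i * a N j)).
    + generalize (a_pos N i) (a_pos N j); nra.
    + intros Hz. rewrite Rmult_assoc. apply s3_bound; auto.
  - assert (E : sum_f_R0 (fun i => sum_f_R0 (fun j => 3 * a N i * a N j) (2*N)) (2*N)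
              = 3 * (sum_f_R0 (a N) (2*N) * sum_f_R0 (a N) (2*N))).
    { transitivity (sum_f_R0 (fun i => (3 * sum_f_R0 (a N) (2*N)) * a N i) (2*N)).
      - apply sum_eq; intros i _.
        replace (3 * sum_f_R0 (a N) (2 * N) * a N i) with ((3 * a N i) * sum_f_R0 (a N) (2 * N)) by ring.
        rewrite <- sum_scal. apply sum_eq; intros. ring.
      - rewrite sum_scal. ring. }
    rewrite E. generalize (suma N). assert (0 <= sum_f_R0 (a N) (2*N)).
    { apply cond_pos_sum; intros; apply Rlt_le, a_pos. }
    assert (0 < 4 / (INR N + 1)). { generalize (pos_INR N); intros; apply Rdiv_lt_0_compat; lra. }
    intros. nra.
Qed.

Lemma s6_le_s3 m n : (m <> 0 \/ n <> 0)%Z -> sk 6 m n <= sk 3 m n.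
Proof.
  intros H. generalize (s_ge1 m n H). unfold sk. set (s := IZR m ^ 2 + IZR n ^ 2). intros.
  apply Rinv_le_contravar. apply pow_lt; lra.
  replace (s ^ 6) with (s^3 * s^3) by ring.
  assert (1 <= s^3) by (apply (pow_R1_Rle s 3); lra). nra.
Qed.

Lemma s6_partial N : sq_partial (sk 6) N <= 75.
Proof. eapply Rle_trans; [apply sq_le, s6_le_s3|apply s3_partial]. Qed.

Definition Q (y : R) (m n : Z) : R := / y * (IZR m + 0 * IZR n) ^ 2 + y * IZR n ^ 2.
Definition gk (k : nat) (y : R) : Z -> Z -> R := fun m n => / (Q y m n) ^ k.

Lemma Q_lower y m n : 1 <= y -> (IZR m ^ 2 + IZR n ^ 2) / y <= Q y m n.
Proof.
  intros Hy. unfold Q. replace (IZR m + 0 * IZR n) with (IZR m) by ring.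
  assert (0 <= IZR n ^ 2) by nra.
  assert (1 <= y * y) by nra. assert (IZR n ^ 2 <= y * y * IZR n ^2) by nra.
  replace (/ y * IZR m ^ 2 + y * IZR n ^ 2) with ((IZR m ^ 2 + y * y * IZR n ^ 2) / y) by (field; lra).
  unfold Rdiv. apply Rmult_le_compat_r. apply Rlt_le, Rinv_0_lt_compat; lra. lra.
Qed.

Lemma gk_le k y m n : 1 <= y -> (m <> 0 \/ n <> 0)%Z -> gk k y m n <= y ^ k * sk k m n.
Proof.
  intros Hy H. generalize (s_ge1 m n H) (Q_lower y m n Hy). unfold gk, sk.
  set (s := IZR m ^ 2 + IZR n ^ 2). set (q := Q y m n). intros Hs Hq.
  replace (y ^ k * / s ^ k) with (/ (s / y) ^ k).
  2:{ rewrite <- pow_inv. replace (/ (s / y)) with (y * / s) by (field; lra).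
      rewrite Rpow_mult_distr, pow_inv. reflexivity. }
  apply Rinv_le_contravar. apply pow_lt. apply Rdiv_lt_0_compat; lra.
  apply pow_incr. split; [|exact Hq]. apply Rlt_le, Rdiv_lt_0_compat; lra.
Qed.

Lemma gk_nonneg k y : 1 <= y -> nonnegf (gk k y).
Proof.
  intros Hy m n H. generalize (s_ge1 m n H) (Q_lower y m n Hy). unfold gk. intros Hs Hq.
  apply Rlt_le, Rinv_0_lt_compat, pow_lt. eapply Rlt_le_trans; [|exact Hq].
  apply Rdiv_lt_0_compat; lra.
Qed.

Lemma gk_partial k y N : 1 <= y -> (k = 3 \/ k = 6)%nat -> sq_partial (gk k y) N <= y ^ k * 75.
Proof.
  intros Hy Hk. apply Rle_trans with (sq_partial (fun m n => y ^ k * sk k m n + 0 * sk k m n) N).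
  - apply sq_le. intros. rewrite Rmult_0_l, Rplus_0_r. apply gk_le; auto.
  - rewrite sq_lin. assert (0 < y ^ k) by (apply pow_lt; lra).
    destruct Hk as [->| ->].
    + generalize (s3_partial N); nra.
    + generalize (s6_partial N); nra.
Qed.

Lemma cv_const c : Un_cv (fun _ => c) c.
Proof. intros e He. exists 0%nat. intros. unfold R_dist. rewrite Rminus_diag, Rabs_R0. lra. Qed.

Lemma cv_scal u l c : Un_cv u l -> Un_cv (fun n => c * u n) (c * l).
Proof. intros H. apply CV_mult; auto. apply cv_const. Qed.

Lemma sk_cv k : (k = 3 \/ k = 6)%nat -> Un_cv (sq_partial (sk k)) (lattice_sum (sk k)).
Proof.
  intros [->| ->]; eapply cv_nonneg; try apply sk_nonneg.
  apply s3_partial. apply s6_partial.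
Qed.

Lemma gk_cv k y : 1 <= y -> (k = 3 \/ k = 6)%nat -> Un_cv (sq_partial (gk k y)) (lattice_sum (gk k y)).
Proof. intros. eapply cv_nonneg. apply gk_nonneg; auto. intros; apply gk_partial; auto. Qed.

Lemma P_up k y : 1 <= y -> (k = 3 \/ k = 6)%nat ->
  lattice_sum (gk k y) <= y ^ k * lattice_sum (sk k).
Proof.
  intros Hy Hk. eapply Rle_cv_lim; [| apply gk_cv; auto | apply cv_scal, sk_cv; auto].
  intros N. simpl.
  apply Rle_trans with (sq_partial (fun m n => y ^ k * sk k m n + 0 * sk k m n) N).
  - apply sq_le. intros. rewrite Rmult_0_l, Rplus_0_r. apply gk_le; auto.
  - rewrite sq_lin. lra.
Qed.

Lemma gk_10 k y : 1 <= y -> gk k y 1%Z 0%Z = y ^ k /\ gk k y (-1)%Z 0%Z = y ^ k.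
Proof.
  intros Hy. unfold gk, Q. simpl IZR.
  replace (/ y * (1 + 0 * 0) ^ 2 + y * 0 ^ 2) with (/ y) by ring.
  replace (/ y * (-1 + 0 * 0) ^ 2 + y * 0 ^ 2) with (/ y) by ring.
  rewrite pow_inv, Rinv_inv. auto.
Qed.

Lemma P_low k y : 1 <= y -> (k = 3 \/ k = 6)%nat -> 2 * y ^ k <= lattice_sum (gk k y).
Proof.
  intros Hy Hk. destruct (gk_10 k y Hy) as [E1 E2].
  apply Rle_trans with (sq_partial (gk k y) 1).
  - generalize (sq1_ge (gk k y) (gk_nonneg k y Hy)). rewrite E1, E2. lra.
  - eapply lim_ge. apply gk_nonneg; auto. intros; apply gk_partial; auto.
Qed.

Lemma zeta_low k : (k = 3 \/ k = 6)%nat -> 2 <= lattice_sum (sk k).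
Proof.
  intros Hk. apply Rle_trans with (sq_partial (sk k) 1).
  - generalize (sq1_ge (sk k) (sk_nonneg k)). unfold sk. simpl IZR.
    replace (1 ^ 2 + 0 ^ 2) with 1 by ring. replace ((-1) ^ 2 + 0 ^ 2) with 1 by ring.
    rewrite pow1, Rinv_1. lra.
  - destruct Hk as [->| ->]; eapply lim_ge; try apply sk_nonneg.
    apply s3_partial. apply s6_partial.
Qed.

Lemma E_decomp y A : 1 <= y -> 0 < A ->
  E_f V 0 y A = / A ^ 6 * lattice_sum (gk 6 y) - 2 * / A ^ 3 * lattice_sum (gk 3 y).
Proof.
  intros Hy HA.
  assert (Hf : (fun m n => V (A * (/ y * (IZR m + 0 * IZR n) ^ 2 + y * IZR n ^ 2))) =
               (fun m n => / A ^ 6 * gk 6 y m n + (- 2 * / A ^ 3) * gk 3 y m n)).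
  { apply functional_extensionality; intro m; apply functional_extensionality; intro n.
    unfold V, gk, Q. rewrite !Rpow_mult_distr, !Rinv_mult. ring. }
  unfold E_f. rewrite Hf.
  set (g := fun m n => / A ^ 6 * gk 6 y m n + (- 2 * / A ^ 3) * gk 3 y m n).
  assert (Hc : Un_cv (sq_partial g) (/ A ^ 6 * lattice_sum (gk 6 y) + (- 2 * / A ^ 3) * lattice_sum (gk 3 y))).
  { assert (E : sq_partial g = fun N => / A ^ 6 * sq_partial (gk 6 y) N + (- 2 * / A ^ 3) * sq_partial (gk 3 y) N).
    { apply functional_extensionality; intro N. unfold g. apply sq_lin. }
    rewrite E. apply CV_plus; apply cv_scal; apply gk_cv; auto. }
  assert (Hl : Un_cv (sq_partial g) (lattice_sum g)).
  { unfold lattice_sum. apply epsilon_spec. eexists; exact Hc. }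
  rewrite (UL_sequence _ _ _ Hl Hc). ring.
Qed.

Lemma z6E : zeta6 = lattice_sum (sk 3). Proof. reflexivity. Qed.
Lemma z12E : zeta12 = lattice_sum (sk 6). Proof. reflexivity. Qed.

Lemma rp_cube y : 0 < y -> Rpower (y ^ 3) (1/3) = y.
Proof.
  intros Hy. rewrite <- (Rpower_pow 3 y Hy), Rpower_mult.
  replace (INR 3 * (1/3)) with 1 by (simpl; field). apply Rpower_1; auto.
Qed.

Lemma cube_rp A : 0 < A -> (Rpower A (1/3)) ^ 3 = A.
Proof.
  intros HA. rewrite <- Rpower_pow by (unfold Rpower; apply exp_pos).
  rewrite Rpower_mult. replace (1/3 * INR 3) with 1 by (simpl; field). apply Rpower_1; auto.
Qed.

Lemma quad A y : 1 < A -> is_minimizer A y ->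
  2 * (y^3)^2 - 2 * zeta6 * A^3 * y^3 + 4 * A^4 - zeta12 * A^2 <= 0.
Proof.
  intros HA [Hy Hmin].
  set (ys := Rpower A (1/3)).
  assert (Hys3 : ys ^ 3 = A) by (apply cube_rp; lra).
  assert (Hys : 1 <= ys).
  { unfold ys. apply Rle_trans with (Rpower A 0); [rewrite Rpower_O; lra | apply Rle_Rpower; lra]. }
  assert (H1 := Hmin ys Hys).
  rewrite (E_decomp y A Hy) in H1 by lra. rewrite (E_decomp ys A Hys) in H1 by lra.
  assert (L6 := P_low 6 y Hy (or_intror eq_refl)).
  assert (U3 := P_up 3 y Hy (or_introl eq_refl)).
  assert (U6 := P_up 6 ys Hys (or_intror eq_refl)).
  assert (L3 := P_low 3 ys Hys (or_introl eq_refl)).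
  rewrite <- z6E in U3. rewrite <- z12E in U6.
  replace (ys ^ 6) with ((ys ^ 3)^2) in U6 by ring. replace (y ^ 6) with ((y ^ 3)^2) in L6 by ring.
  rewrite Hys3 in U6, L3.
  set (X := y ^ 3) in *.
  set (P6 := lattice_sum (gk 6 y)) in *. set (P3 := lattice_sum (gk 3 y)) in *.
  set (R6 := lattice_sum (gk 6 ys)) in *. set (R3 := lattice_sum (gk 3 ys)) in *.
  assert (HA6 : 0 < / A ^ 6) by (apply Rinv_0_lt_compat, pow_lt; lra).
  assert (HA3 : 0 < / A ^ 3) by (apply Rinv_0_lt_compat, pow_lt; lra).
  assert (H2 : / A ^ 6 * (2 * X ^ 2) - 2 * / A ^ 3 * (X * zeta6)
               <= / A ^ 6 * (A ^ 2 * zeta12) - 2 * / A ^ 3 * (2 * A)).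
  { assert (/ A ^ 6 * (2 * X ^ 2) <= / A ^ 6 * P6) by (apply Rmult_le_compat_l; lra).
    assert (/ A ^ 3 * P3 <= / A ^ 3 * (X * zeta6)) by (apply Rmult_le_compat_l; lra).
    assert (/ A ^ 6 * R6 <= / A ^ 6 * (A ^ 2 * zeta12)) by (apply Rmult_le_compat_l; lra).
    assert (/ A ^ 3 * (2 * A) <= / A ^ 3 * R3) by (apply Rmult_le_compat_l; lra).
    lra. }
  apply (Rmult_le_compat_l (A ^ 6)) in H2; [|apply pow_le; lra].
  replace (A ^ 6 * (/ A ^ 6 * (2 * X ^ 2) - 2 * / A ^ 3 * (X * zeta6)))
    with (2 * X ^ 2 - 2 * zeta6 * A ^ 3 * X) in H2 by (field; lra).
  replace (A ^ 6 * (/ A ^ 6 * (A ^ 2 * zeta12) - 2 * / A ^ 3 * (2 * A)))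
    with (zeta12 * A ^ 2 - 4 * A ^ 4) in H2 by (field; lra).
  lra.
Qed.

Lemma rp_low X1 y : 1 <= y -> X1 <= y ^ 3 -> Rpower X1 (1/3) <= y.
Proof.
  intros Hy HX. destruct (Rle_lt_dec X1 0) as [H|H].
  - unfold Rpower, ln. destruct (Rlt_dec 0 X1); [exfalso; lra|]. rewrite Rmult_0_r, exp_0. lra.
  - apply Rle_trans with (Rpower (y ^ 3) (1/3)); [|rewrite rp_cube; lra].
    apply Rle_Rpower_l; lra.
Qed.

Lemma rp_up X2 y : 1 <= y -> y ^ 3 <= X2 -> y <= Rpower X2 (1/3).
Proof.
  intros Hy HX. apply Rle_trans with (Rpower (y ^ 3) (1/3)); [rewrite rp_cube; lra|].
  apply Rle_Rpower_l. lra. split; [|auto]. apply pow_lt; lra.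
Qed.

Theorem proposition5p1 :
  exists A3 : R, 0 < A3 /\
    (forall A yA : R, A3 < A -> is_minimizer A yA ->
       Rpower (X1 A) (1/3) <= yA <= Rpower (X2 A) (1/3)) /\
    (forall M : R, exists A0 : R, forall A yA : R,
       A0 < A -> A3 < A -> is_minimizer A yA -> M <= yA) /\
    (exists C : R, 0 < C /\
       forall A yA : R, A3 < A -> is_minimizer A yA -> yA <= C * A).
Proof.
  assert (Z6 : 2 <= zeta6) by (rewrite z6E; apply zeta_low; auto).
  assert (Z12 : 2 <= zeta12) by (rewrite z12E; apply zeta_low; auto).
  exists 1. split; [lra|]. split; [|split].
  - intros A y HA Hm. assert (Hq := quad A y HA Hm). destruct Hm as [Hy _].
    assert (HX : 1 <= y ^ 3) by (apply pow_R1_Rle; lra).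
    set (X := y ^ 3) in *.
    set (D := 4 * zeta6 ^ 2 * A ^ 6 - 32 * A ^ 4 + 8 * zeta12 * A ^ 2).
    assert (HD : (4 * X - 2 * zeta6 * A ^ 3)² <= D) .
    { unfold D, Rsqr. replace ((4 * X - 2 * zeta6 * A ^ 3) * (4 * X - 2 * zeta6 * A ^ 3))
        with (8 * (2 * X ^ 2 - 2 * zeta6 * A ^ 3 * X) + 4 * zeta6 ^ 2 * A ^ 6) by ring. lra. }
    apply sqrt_le_1_alt in HD. rewrite sqrt_Rsqr_abs in HD.
    assert (T1 := Rle_abs (4 * X - 2 * zeta6 * A ^ 3)).
    assert (T2 := Rle_abs (- (4 * X - 2 * zeta6 * A ^ 3))). rewrite Rabs_Ropp in T2.
    split.
    + apply rp_low; auto. unfold X1. fold D. fold X. lra.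
    + apply rp_up; auto. unfold X2. fold D. fold X. lra.
  - intros M. set (M' := Rmax M 1).
    assert (HM1 : 1 <= M') by apply Rmax_r. assert (HM : M <= M') by apply Rmax_l.
    exists (zeta6 * M' ^ 3 + zeta12). intros A y HA0 HA Hm.
    assert (Hq := quad A y HA Hm). destruct Hm as [Hy _].
    assert (HX : 1 <= y ^ 3) by (apply pow_R1_Rle; lra).
    assert (HM3 : 1 <= M' ^ 3) by (apply pow_R1_Rle; lra).
    set (X := y ^ 3) in *. set (W := M' ^ 3) in *.
    assert (H1 : 2 * zeta6 * A ^ 3 * X >= 4 * A ^ 4 - zeta12 * A ^ 2) by nra.
    assert (H2 : 4 * A ^ 4 - zeta12 * A ^ 2 >= 2 * zeta6 * A ^ 3 * W).
    { replace (4 * A ^ 4 - zeta12 * A ^ 2) with (A^2 * (4 * A ^ 2 - zeta12)) by ring.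
      replace (2 * zeta6 * A ^ 3 * W) with (A^2 * (2 * zeta6 * A * W)) by ring.
      apply Rle_ge, Rmult_le_compat_l; [nra|]. nra. }
    assert (H3 : W <= X).
    { assert (0 < 2 * zeta6 * A ^ 3) by (assert (0 < A^3) by (apply pow_lt; lra); nra). nra. }
    destruct (Rle_lt_dec M' y) as [H|H]; [lra|].
    exfalso. unfold X, W in H3. assert (y ^ 3 < M' ^ 3) by (apply cube_lt; lra). lra.
  - set (K := zeta6 + zeta12 / 2). exists (K + 1). split; [unfold K; lra|].
    intros A y HA Hm. assert (Hq := quad A y HA Hm). destruct Hm as [Hy _].
    assert (HX : 1 <= y ^ 3) by (apply pow_R1_Rle; lra).
    set (X := y ^ 3) in *.
    assert (HA4 : 0 <= A ^ 4) by (apply pow_le; lra).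
    assert (H1 : 2 * X ^ 2 <= 2 * zeta6 * A ^ 3 * X + zeta12 * A ^ 2) by lra.
    assert (H2 : X <= K * A ^ 3).
    { assert (HA2 : 0 < A ^ 2) by (apply pow_lt; lra).
      assert (Hz : 0 <= zeta12 * A ^ 2) by nra.
      assert (zeta12 * A ^ 2 * 1 <= zeta12 * A ^ 2 * X) by (apply Rmult_le_compat_l; lra).
      assert (A ^ 2 <= A ^ 3).
      { replace (A ^ 3) with (A ^ 2 * A) by ring. replace (A^2) with (A^2 * 1) at 1 by ring.
        apply Rmult_le_compat_l; lra. }
      assert (2 * X <= 2 * zeta6 * A ^ 3 + zeta12 * A ^ 2).
      { apply (Rmult_le_reg_r X); [lra|].
        replace (2 * X * X) with (2 * X ^ 2) by ring. nra. }
      assert (zeta12 * A ^ 2 <= zeta12 * A ^ 3) by (apply Rmult_le_compat_l; lra).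
      unfold K. lra. }
    destruct (Rle_lt_dec y ((K + 1) * A)) as [H|H]; [lra|].
    exfalso. assert (HK : 0 <= (K + 1) * A) by (unfold K; nra).
    assert (((K + 1) * A) ^ 3 < y ^ 3) by (apply cube_lt; lra).
    rewrite Rpow_mult_distr in H0.
    assert (1 <= K + 1) by (unfold K; lra).
    assert (K + 1 <= (K + 1) ^ 3) by (simpl; nra).
    assert (0 < A ^ 3) by (apply pow_lt; lra).
    assert ((K + 1) * A ^ 3 <= (K + 1) ^ 3 * A ^ 3) by (apply Rmult_le_compat_r; lra).
    unfold X in H2. lra.
Qed.
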